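(* Let $\mathcal C$ be a linear $[n,k]$ MDS code over $F$. Then $\mathcal C$ is $L$-MDS for every $L\in\mathbb Z^+$ with $L\ge\binom{n}{k}-k(n-k)$.
   Context: $F=\mathrm{GF}(q)$; $\mathsf w(\cdot)$ is Hamming weight. For $L\in\mathbb Z^+$ and nonnegative $\tau\in\frac{1}{L+1}\mathbb Z$, a code $\mathcal C\subseteq F^n$ is strongly-$(\tau,L)$-list decodable if there do not exist $y\in F^n$ and $L+1$ distinct codewords $c_0,\dots,c_L\in\mathcal C$ with $\sum_{m=0}^{L}\mathsf w(y-c_m)\le(L+1)\tau$. A linear $[n,k]$ code over $F$ is called $L$-MDS if it is strongly-$\left(\frac{L(n-k)}{L+1},L\right)$-list decodable; equivalently, any $L+1$ distinct vectors lying in a common coset of the code have total Hamming weight greater than $L(n-k)$. *)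

(* Defs.v *)
From HB Require Import structures.
From mathcomp Require Import all_boot all_order all_algebra all_field.
Set Implicit Arguments. Unset Strict Implicit. Unset Printing Implicit Defensive.
Import GRing.Theory.
Local Open Scope ring_scope.

Definition hwt (F : fieldType) (n : nat) (v : 'rV[F]_n) : nat :=
  #|[set i : 'I_n | v 0 i != 0]|.

Definition linear_code (F : fieldType) (n k : nat) (C : {vspace 'rV[F]_n}) : Prop :=
  \dim C = k.

(* MDS: minimum distance n - k + 1 (meets the Singleton bound), i.e. every
   nonzero codeword has Hamming weight at least n - k + 1. *)
Definition MDS_code (F : fieldType) (n k : nat) (C : {vspace 'rV[F]_n}) : Prop :=
  forall c : 'rV[F]_n, c \in C -> c != 0 -> (n - k + 1 <= hwt c)%N.

(* strongly-(tau,L)-list decodable, with the radius given as (L+1)*tau = R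
   (a natural number): there is no y and L+1 distinct codewords c_0..c_L with
   sum_m w(y - c_m) <= R. *)
Definition strongly_list_decodable_scaled (F : fieldType) (n : nat)
  (C : {vspace 'rV[F]_n}) (R L : nat) : Prop :=
  ~ exists (y : 'rV[F]_n) (c : 'I_L.+1 -> 'rV[F]_n),
      [/\ injective c, (forall m, c m \in C) &
          (\sum_(m < L.+1) hwt (y - c m) <= R)%N].

(* L-MDS: strongly-(L(n-k)/(L+1), L)-list decodable; (L+1)*tau = L(n-k). *)
Definition L_MDS (F : fieldType) (n k L : nat) (C : {vspace 'rV[F]_n}) : Prop :=
  strongly_list_decodable_scaled C (L * (n - k)) L.

(* Main.v *)
Require Import Defs.
From HB Require Import structures.
From mathcomp Require Import all_boot all_order all_algebra all_field zify.
Import GRing.Theory.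
Local Open Scope ring_scope.
Lemma hwt0 (F : fieldType) n (v : 'rV[F]_n) : hwt v = 0%N -> v = 0.
Proof.
move=> /eqP; rewrite /hwt cards_eq0 => /eqP h.
apply/rowP => i; rewrite mxE.
apply/eqP; apply/negPn/negP => hi.
have : i \in [set i0 | v 0 i0 != 0] by rewrite inE.
by rewrite h inE.
Qed.
Lemma binlb k a : (1 + k*a <= 'C(a,k) + k*k)%N.
Proof.
case: k => [|j]; first by rewrite bin0.
case: (ltnP a j.+1) => ha; first by rewrite bin_small //; nia.
have [d ->] : exists d, a = (j.+1 + d)%N by exists (a - j.+1)%N; lia.
elim: d => [|d IH]; first by rewrite addn0 binn; nia.
rewrite addnS binS.
have : (j.+1 <= 'C(j.+1 + d, j))%N.
  have := leq_bin2l j (leq_addr d j.+1).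
  by rewrite -(bin_sub (leqnSn j)) subSnn bin1.
nia.
Qed.
Lemma count_lemma (n k L : nat) (A : 'I_L.+1 -> {set 'I_n}) :
  (forall m1 m2 (S : {set 'I_n}), #|S| = k -> S \subset A m1 -> S \subset A m2 -> m1 = m2) ->
  (\sum_(m < L.+1) 'C(#|A m|, k) <= 'C(n, k))%N.
Proof.
move=> Huniq.
under eq_bigr => m _ do rewrite -cards_draws -sum1_card big_mkcond /=.
rewrite exchange_big /=.
rewrite -[in X in (_ <= X)%N](card_ord n) -card_draws -sum1_card.
rewrite [X in (_ <= X)%N]big_mkcond /=.
apply: leq_sum => S _.
rewrite -big_mkcond sum1_card inE.
case: eqP => hS.
  apply/card_le1_eqP => m1 m2 h1 h2.
  have : S \in [set A0 : {set 'I_n} | A0 \subset A m1 & #|A0| == k] := h1.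
  have : S \in [set A0 : {set 'I_n} | A0 \subset A m2 & #|A0| == k] := h2.
  rewrite !inE => /andP[h2' _] /andP[h1' _].
  exact: (Huniq m2 m1 S hS).
rewrite leqn0; apply/eqP; apply: eq_card0 => m.
apply/negbTE; apply/negP => h.
have : S \in [set A0 : {set 'I_n} | A0 \subset A m & #|A0| == k] := h.
by rewrite inE => /andP[_ /eqP].
Qed.

Theorem mainTheorem12 (F : finFieldType) (n k : nat) (C : {vspace 'rV[F]_n}) :
  linear_code k C -> MDS_code k C ->
  forall L : nat, (0 < L)%N -> ('C(n, k) - k * (n - k) <= L)%N ->
  L_MDS k L C.
Proof.
move=> _ Hmds L L0 HL [y [c [cinj cC Hsum]]].
have Hlt : ord0 != ord_max :> 'I_L.+1 by apply/eqP => /(congr1 val) /= h; lia.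
case: (leqP n k) => hkn.
  have : (n - k = 0)%N by lia.
  move=> e; rewrite e muln0 leqn0 sum_nat_eq0 in Hsum.
  have hz m : c m = y.
    have := forallP Hsum m; rewrite /= => /eqP /hwt0 /eqP.
    by rewrite subr_eq0 => /eqP.
  by move: Hlt; rewrite (cinj ord0 ord_max) ?eqxx // !hz.
pose A m := [set i : 'I_n | (y - c m) 0 i == 0].
have hA m : (#|A m| + hwt (y - c m))%N = n.
  rewrite /hwt -[in RHS](card_ord n) -(cardsC (A m)); congr (_ + _)%N.
  by apply: eq_card => i; rewrite !inE.
have Hu : forall m1 m2 (S : {set 'I_n}), #|S| = k -> S \subset A m1 -> S \subset A m2 -> m1 = m2.
  move=> m1 m2 S hS s1 s2; apply: cinj; apply/eqP; rewrite -subr_eq0; apply/eqP.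
  apply/eqP/negPn/negP => hd.
  have := Hmds _ (memvB (cC m1) (cC m2)) hd.
  have : (hwt (c m1 - c m2) <= n - k)%N.
    rewrite /hwt -hS -[in X in (_ <= X - _)%N](card_ord n) -(cardsC S) addKn.
    apply: subset_leq_card; apply/subsetP => i; rewrite !inE.
    apply: contra => iS.
    have := subsetP s1 i iS; have := subsetP s2 i iS; rewrite !inE !mxE.
    by rewrite !subr_eq0 => /eqP <- /eqP <-.
  move=> h1 h2; have := leq_trans h2 h1; by rewrite addn1 ltnn.
have H1 := @count_lemma _ _ _ A Hu.
have H2 : (\sum_(m < L.+1) (1 + k * #|A m|) <= \sum_(m < L.+1) ('C(#|A m|, k) + k * k))%N.
  by apply: leq_sum => m _; apply: binlb.
rewrite !big_split /= -!big_distrr /= !sum_nat_const card_ord /= in H2.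
have H3 : (\sum_(m < L.+1) #|A m| + \sum_(m < L.+1) hwt (y - c m) = L.+1 * n)%N.
  by rewrite -big_split /= (eq_bigr (fun=> n)) ?sum_nat_const ?card_ord // => m _; rewrite hA.
move: H1 H2 H3 Hsum HL hkn.
move: (\sum_(m < L.+1) #|A m|)%N (\sum_(m < L.+1) hwt (y - c m))%N
  (\sum_(m < L.+1) 'C(#|A m|, k))%N 'C(n, k) => sA sW sC Cn.
rewrite /muln /= => *.
have [d ed] : exists d, n = (k + d)%N by exists (n - k)%N; lia.
subst n. nia.
Qed.
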